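(* Let $T_1,T_2,\dots$ be independent exponential random variables with parameters $\lambda_i=4\sqrt{i+1}$, and for constants $c_1,c_2>0$ and $k\ge1$ let $G=\big\{|\{1\le i\le k: T_i\ge c_2/\sqrt{i}\}|>c_1k\big\}$. For any $\tilde c\in(0,\infty)$ there exist $c_1,c_2>0$ such that for all sufficiently large $k$, $\mathbf P(G^c)\le\exp(-\tilde c k)$. *)

(* Defs.v *)
From HB Require Import structures.
From mathcomp Require Import all_boot all_order all_algebra.
From mathcomp Require Import all_classical all_reals all_analysis.
Set Implicit Arguments. Unset Strict Implicit. Unset Printing Implicit Defensive.
Import Order.TTheory GRing.Theory Num.Theory.
Local Open Scope classical_set_scope.
Local Open Scope ring_scope.

(* Mutual independence of a family of real random variables (not in the
   library): for every finite set of distinct indices >= 1 (the family is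
   T_1, T_2, ...; index 0 is unused) and every family of
   Borel sets, the joint preimage probability factorizes. *)
Definition mutually_independent_rv d (T : measurableType d) (R : realType)
    (P : probability T R) (X : nat -> {RV P >-> R}) : Prop :=
  forall (s : seq nat) (B : nat -> set R),
    uniq s -> all (leq 1) s -> (forall i, measurable (B i)) ->
    P (\big[setI/setT]_(i <- s) (X i @^-1` B i)) =
    (\prod_(i <- s) P (X i @^-1` B i))%E.

Definition exponential_rv d (T : measurableType d) (R : realType)
    (P : probability T R) (Y : {RV P >-> R}) (rate : R) : Prop :=
  forall A : set R, measurable A -> P (Y @^-1` A) = exponential_prob rate A.

Definition lam (R : realType) (i : nat) : R := 4 * Num.sqrt (i.+1)%:R.

Definition Gc d (T : measurableType d) (R : realType) (P : probability T R)
    (X : nat -> {RV P >-> R}) (c1 c2 : R) (k : nat) : set T :=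
  [set w | (count (fun i => c2 / Num.sqrt i%:R <= X i w) (iota 1 k))%:R
             <= c1 * k%:R].

(* Main.v *)
Require Import Defs.
From HB Require Import structures.
From mathcomp Require Import all_boot all_order all_algebra.
From mathcomp Require Import all_classical all_reals all_analysis.
From mathcomp Require Import ring lra zify.
Import Order.TTheory GRing.Theory Num.Theory.
Local Open Scope classical_set_scope.
Local Open Scope ring_scope.

Lemma count_card (k : nat) (p : pred nat) :
  count p (iota 1 k) = #|[set i : 'I_k | p i.+1]%SET|.
Proof.
rewrite (iotaDl 1 0) count_map -val_enum_ord count_map cardE.
rewrite -size_filter /enum_mem -enumT /= -filter_predI.
congr (size _); apply: eq_filter => i /=; by rewrite andbT inE.
Qed.

Lemma expo_bound (R : realType) (rate a : R) : 0 < rate -> 0 < a ->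
  (exponential_prob rate [set` `]-oo, a[] <= (rate * a)%:E)%E.
Proof.
move=> r0 a0.
have -> : [set` `]-oo, a[] = [set` `]-oo, 0[] `|` [set` `[0, a[] :> set R.
  apply/seteqP; split => x /=; rewrite !in_itv/=.
    by move=> xa; have [x0|x0] := ltP x 0; [left | right; apply/andP].
  by case=> [x0|/andP[]//]; apply: lt_trans x0 a0.
rewrite /exponential_prob ge0_integral_setU //=; last 3 first.
- apply: (measurable_funS measurableT) => //; apply/measurable_realfun.measurable_EFinP; exact: measurable_exponential_pdf.
- by move=> x _; rewrite lee_fin exponential_pdf_ge0// ltW.
- apply/disj_setPS => x [] /=; rewrite !in_itv/= => x0 /andP[x0' _].
  by move: x0'; rewrite leNgt x0.
rewrite [X in (X + _)%E]integral0_eq ?add0e; last first.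
  by move=> x /=; rewrite in_itv/= => x0; rewrite lt0_exponential_pdf.
apply: (@le_trans _ _ (\int[lebesgue_measure]_(x in `[0%R, a]) (exponential_pdf rate x)%:E)%E).
  apply: ge0_subset_integral => //.
  - apply: (measurable_funS measurableT) => //; apply/measurable_realfun.measurable_EFinP; exact: measurable_exponential_pdf.
  - by move=> x _; rewrite lee_fin exponential_pdf_ge0// ltW.
  - by apply: subset_itvl; rewrite bnd_simp.
rewrite -/(exponential_prob rate _) exponential_prob_itv0c// -EFinB lee_fin.
have := expR_ge1Dx (- rate * a); rewrite mulNr; lra.
Qed.

Lemma bigsetI_mem (T : Type) (I : eqType) (s : seq I) (F : I -> set T) (w : T) :
  (forall i, i \in s -> F i w) -> (\big[setI/setT]_(i <- s) F i) w.
Proof.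
elim: s => [|a s IH] H; first by rewrite big_nil.
rewrite big_cons; split; first by apply: H; rewrite mem_head.
by apply: IH => i hi; apply: H; rewrite inE hi orbT.
Qed.

Lemma sum_const_seq (R : realType) (I : Type) (s : seq I) (x : R) :
  \sum_(i <- s) x = x *+ size s.
Proof.
elim: s => [|a s IH]; first by rewrite big_nil.
by rewrite big_cons IH /= mulrS.
Qed.

Lemma lam_bound (R : realType) (j : nat) (q : R) : (1 <= j)%N -> 0 < q ->
  lam R j * (q / 8 / Num.sqrt j%:R) <= q.
Proof.
move=> j1 q0.
have s0 : 0 < Num.sqrt (j%:R : R) by rewrite sqrtr_gt0 ltr0n.
have us : Num.sqrt (j.+1%:R : R) <= 2 * Num.sqrt j%:R.
  have -> : 2 * Num.sqrt (j%:R : R) = Num.sqrt (2 ^+ 2 * j%:R).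
    by rewrite sqrtrM ?sqrtr_sqr ?ger0_norm // exprn_ge0.
  rewrite ler_sqrt; last by rewrite mulr_ge0 // exprn_ge0.
  rewrite -natrX -natrM ler_nat; lia.
rewrite /lam.
have -> : 4 * Num.sqrt (j.+1%:R : R) * (q / 8 / Num.sqrt j%:R)
   = (Num.sqrt j.+1%:R * q) / (2 * Num.sqrt j%:R).
  by field; rewrite gt_eqF.
rewrite ler_pdivrMr; last by rewrite mulr_gt0.
nra.
Qed.

Theorem mainTheorem6 (R : realType) (d : measure_display) (T : measurableType d)
    (P : probability T R) (X : nat -> {RV P >-> R}) :
  mutually_independent_rv X ->
  (forall i, (1 <= i)%N -> exponential_rv (X i) (lam R i)) ->
  forall ct : R, 0 < ct ->
  exists c1 c2 : R, [/\ 0 < c1, 0 < c2 &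
    exists K : nat, forall k : nat, (K <= k)%N -> (1 <= k)%N ->
      (P (Gc X c1 c2 k) <= (expR (- (ct * k%:R)))%:E)%E].
Proof.
move=> indep expo ct ct0.
pose r : R := expR (- ct) / 2.
pose q : R := r ^+ 2.
have r0 : 0 < r by rewrite divr_gt0 // expR_gt0.
have r1 : r <= 1.
  have : expR (- ct) < 1 by rewrite expR_lt1 oppr_lt0.
  rewrite /r; lra.
have q0 : 0 < q by rewrite exprn_gt0.
exists (1/2), (q/8); split => //; first by rewrite divr_gt0.
exists 0%N => k _ k1.
pose B (j : nat) : set R := [set` `]-oo, q / 8 / Num.sqrt j%:R[].
pose F j := X j @^-1` B j.
pose E (S : {set 'I_k}) : set T :=
  if (k <= 2 * #|S|)%N then \big[setI/setT]_(j <- [seq (val i).+1 | i <- enum S]) F j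
  else set0.
have mB j : measurable (B j) by exact: measurable_itv.
have mF j : measurable (F j) by exact: measurable_funPTI.
have mE S : measurable (E S).
  rewrite /E; case: ifP => _ //.
  apply: big_ind; [exact: measurableT | by move=> ? ? ? ?; exact: measurableI | by move=> i _; exact: mF].
have pF j : (1 <= j)%N -> (P (F j) <= q%:E)%E.
  move=> j1; rewrite /F expo // /B.
  have l0 : 0 < lam R j by rewrite /lam mulr_gt0 // sqrtr_gt0 ltr0n.
  have a0 : 0 < q / 8 / Num.sqrt (j%:R : R) by rewrite !divr_gt0 // sqrtr_gt0 ltr0n.
  have h := @expo_bound R (lam R j) (q / 8 / Num.sqrt j%:R) l0 a0.
  apply: le_trans h _.
  by rewrite lee_fin lam_bound.
have fP j : P (F j) = (fine (P (F j)))%:E by rewrite fineK // fin_num_measure.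
have PE S : (P (E S) <= (r ^+ k)%:E)%E.
  rewrite /E; case: ifP => hS; last by rewrite measure0 lee_fin exprn_ge0 // ltW.
  rewrite indep //; last 2 first.
  - rewrite map_inj_uniq ?enum_uniq // => i j /= [] /val_inj //.
  - by apply/allP => j /mapP [i _ ->].
  rewrite big_map.
  under eq_bigr do rewrite fP.
  rewrite prodEFin lee_fin.
  apply: (@le_trans _ _ (\prod_(i <- enum S) q)).
    apply: ler_prod => i _; rewrite fine_ge0 //=.
    by rewrite -lee_fin -fP pF.
  rewrite big_enum prodr_const /q -exprM.
  by apply: ler_wiXn2l => //; exact: ltW.
pose p (w : T) (i : nat) : bool := q / 8 / Num.sqrt i%:R <= X i w.
have sub : Gc X (1/2) (q/8) k `<=` \bigcup_(S in [set: {set 'I_k}]) E S.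
  move=> w /= Gw.
  pose A := [set i : 'I_k | p w i.+1]%SET.
  exists (~: A)%SET => //.
  have cA := count_card k (p w); rewrite -/A in cA.
  have hC := cardsC A; rewrite card_ord in hC.
  have h2 : (count (p w) (iota 1 k) * 2 <= k)%N.
    rewrite -(ler_nat R) natrM mulr_natr mulr2n.
    move: Gw; rewrite /Gc /p /= => H; set c := (count _ _)%:R in H *; apply: le_trans (lerD H H) _; by rewrite -mulrDl -splitr mul1r.
  rewrite /E ifT; last first.
    by rewrite cA in h2; move: h2 hC; move: #|A| #|~: A| => a b; lia.
  apply: bigsetI_mem => j /mapP [i hi ->].
  move: hi; rewrite mem_enum !inE /p /F /B /= in_itv /= => hi.
  by rewrite ltNge.
have mG : measurable (Gc X (1/2) (q/8) k).
  pose G' i := [set w | q / 8 / Num.sqrt i%:R <= X i w].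
  have mG' i : measurable (G' i).
    have -> : G' i = X i @^-1` [set` `[q / 8 / Num.sqrt i%:R, +oo[] :> set T.
      by apply/seteqP; split => w /=; rewrite in_itv /= andbT.
    exact: measurable_funPTI.
  pose f w : R := \sum_(i <- iota 1 k) \1_(G' i) w.
  have mf : measurable_fun setT f.
    by apply: measurable_sum => i; exact: measurable_realfun.measurable_indic.
  have fE w : f w = (count (p w) (iota 1 k))%:R.
    rewrite /f; elim: (iota 1 k) => [|a s IH]; first by rewrite big_nil.
    rewrite big_cons IH /= natrD indicE; congr (_%:R + _).
    case: (boolP (p w a)) => h; first by rewrite mem_set.
    by rewrite memNset //; apply/negP.
  have -> : Gc X (1/2) (q/8) k = f @^-1` [set` `]-oo, 1/2 * k%:R]].
    by apply/seteqP; split => w; rewrite /Gc /= in_itv /= fE.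
  have := mf measurableT _ (measurable_itv `]-oo, (1/2 * k%:R)]).
  by rewrite setTI.
apply: le_trans (content_sub_fsum _ _ _ mG sub) _.
- exact: finite_finset.
- by move=> S _; exact: mE.
rewrite fsbig_finite /=; last exact: finite_finset.
set s := finmap.enum_fset _.
apply: le_trans (lee_sum (g := fun=> (r ^+ k)%:E) _ (fun S _ => PE S)) _.
rewrite sumEFin lee_fin sum_const_seq.
have hs : (size s <= 2 ^ k)%N.
  have /card_uniqP <- : uniq s by exact: finmap.fset_uniq.
  apply: (leq_trans (max_card (mem s))).
  rewrite -cardsT -powersetT card_powerset cardsT card_ord; exact: leqnn.
apply: (@le_trans _ _ (r ^+ k *+ 2 ^ k)).
  rewrite -[_ *+ size s]mulr_natr -[_ *+ 2 ^ k]mulr_natr; apply: ler_wpM2l; first by rewrite exprn_ge0 // ltW.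
  by rewrite ler_nat; exact: hs.
rewrite -mulr_natr natrX -exprMn.
have -> : r * 2 = expR (- ct) by rewrite /r divfK // pnatr_eq0.
by rewrite -expRM_natl mulrN [k%:R * _]mulrC.
Qed.
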